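(* Let $k\in\mathbb Z_{\ge1}$ and $a\in\mathbb R_{>0}$. If $a\notin\mathbb J_k:=\{\tfrac{i}{j+1}:i\in\mathbb Z_{\ge1},\ j\in\mathbb Z_{\ge0},\ i+j=k\}=\{\tfrac k1,\tfrac{k-1}{2},\dots,\tfrac1k\}$, then $\Gamma^{a-\delta}_k=\Gamma^{a+\delta}_k$ for all sufficiently small $\delta>0$.
   Context: For $b>0$, $\Gamma^b=(\Gamma^b_0,\Gamma^b_1,\dots)$ is the unit-step lattice path in $\mathbb Z_{\ge0}^2$ which starts at $(0,0)$, lies on or above the line $L_b$ through $(0,-1)$ and $(b,0)$, and steps right (adds $(1,0)$) whenever possible and otherwise steps up (adds $(0,1)$). *)

(* Defs.v *)
From Stdlib Require Import Reals Lra Lia.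
Open Scope R_scope.

(* The line L_b through (0,-1) and (b,0) is y = x/b - 1.
   A lattice point (x,y) lies on or above L_b iff  INR x / b - 1 <= INR y. *)
Definition on_or_above (b : R) (p : nat * nat) : Prop :=
  INR (fst p) / b - 1 <= INR (snd p).

Fixpoint Gamma (b : R) (k : nat) : nat * nat :=
  match k with
  | O => (0%nat, 0%nat)
  | S k' =>
      let p := Gamma b k' in
      if Rle_dec (INR (S (fst p)) / b - 1) (INR (snd p))
      then (S (fst p), snd p)
      else (fst p, S (snd p))
  end.

Definition inJ (k : nat) (a : R) : Prop :=
  exists i j : nat, (1 <= i)%nat /\ (i + j = k)%nat /\ a = INR i / INR (j + 1).

(* Main.v *)
Require Import Defs.
From Stdlib Require Import Reals Lra Lia Arith.
Open Scope R_scope.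

Definition Inv (b : R) (k : nat) (p : nat * nat) : Prop :=
  (fst p + snd p = k)%nat /\
  forall i j : nat, (1 <= i)%nat -> (i + j = k)%nat ->
    ((i <= fst p)%nat <-> INR i <= b * INR (j + 1)).

Lemma divcond (b u v : R) : 0 < b -> (u / b - 1 <= v <-> u <= b * (v + 1)).
Proof.
  intros Hb. assert (E : u = b * (u / b)) by (field; lra).
  split; intros H.
  - rewrite E. apply Rmult_le_compat_l; lra.
  - assert (u / b <= v + 1); [|lra].
    apply (Rmult_le_reg_l b); [lra|]. rewrite <- E; lra.
Qed.

Lemma INR_le_mono (m n : nat) : (m <= n)%nat -> INR m <= INR n.
Proof. apply le_INR. Qed.

Lemma Gamma_inv (b : R) (k : nat) : 0 < b -> Inv b k (Gamma b k).
Proof.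
  intros Hb. unfold Inv. induction k as [|k IH].
  - split; [simpl; lia|]. intros i j Hi Hij. lia.
  - cbn [Gamma]. destruct (Gamma b k) as [x y] eqn:Eg. destruct IH as [Hs IH].
    cbn [fst snd] in Hs, IH |- *.
    destruct (Rle_dec (INR (S x) / b - 1) (INR y)) as [Hc|Hc].
    + apply divcond in Hc; auto.
      split; [cbn [fst snd]; lia|]. cbn [fst snd]. intros i j Hi Hij.
      destruct (lt_eq_lt_dec i (S x)) as [[Hlt|Heq]|Hgt].
      * destruct j as [|j]; [lia|].
        assert (H1 := proj1 (IH i j Hi ltac:(lia)) ltac:(lia)).
        split; intros _; [|lia].
        eapply Rle_trans; [exact H1|]. apply Rmult_le_compat_l; [lra|].
        apply INR_le_mono; lia.
      * subst i. assert (j = y) by lia. subst j.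
        split; intros _; [|lia]. rewrite plus_INR; change (INR 1) with 1; exact Hc.
      * split; intros H; [lia|]. exfalso.
        destruct i as [|i']; [lia|].
        assert (H2 : INR i' <= b * INR (j + 1)).
        { eapply Rle_trans; [apply INR_le_mono with (n := S i'); lia|]. exact H. }
        assert (Ha1 : (1 <= i')%nat) by lia. assert (Ha2 : (i' + j = k)%nat) by lia.
        assert (H3 := proj2 (IH i' j Ha1 Ha2) H2); lia.
    + assert (Hc' : ~ INR (S x) <= b * (INR y + 1)) by (intro H; apply Hc, divcond; auto).
      split; [cbn [fst snd]; lia|]. cbn [fst snd]. intros i j Hi Hij.
      destruct (lt_eq_lt_dec i (S x)) as [[Hlt|Heq]|Hgt].
      * destruct j as [|j]; [lia|].
        assert (H1 := proj1 (IH i j Hi ltac:(lia)) ltac:(lia)).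
        split; intros _; [|lia].
        eapply Rle_trans; [exact H1|]. apply Rmult_le_compat_l; [lra|].
        apply INR_le_mono; lia.
      * subst i. assert (j = y) by lia. subst j.
        split; intros H; [lia|]. exfalso. apply Hc'. rewrite plus_INR in H; change (INR 1) with 1 in H; lra.
      * split; intros H; [lia|]. exfalso.
        destruct i as [|i']; [lia|].
        assert (H2 : INR i' <= b * INR (j + 1)).
        { eapply Rle_trans; [apply INR_le_mono with (n := S i'); lia|]. exact H. }
        assert (Ha1 : (1 <= i')%nat) by lia. assert (Ha2 : (i' + j = k)%nat) by lia.
        assert (H3 := proj2 (IH i' j Ha1 Ha2) H2); lia.
Qed.

Lemma fin_min (P : nat -> R -> Prop) (n : nat) :
  (forall i, (i <= n)%nat -> exists e, 0 < e /\ forall d, 0 < d < e -> P i d) ->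
  exists e, 0 < e /\ forall i, (i <= n)%nat -> forall d, 0 < d < e -> P i d.
Proof.
  induction n as [|n IHn]; intros H.
  - destruct (H 0%nat (le_n 0)) as [e [He Hp]]. exists e; split; auto.
    intros i Hi d Hd. assert (i = 0%nat) by lia. subst; auto.
  - destruct IHn as [e1 [He1 Hp1]]. { intros i Hi; apply H; lia. }
    destruct (H (S n) (le_n _)) as [e2 [He2 Hp2]].
    exists (Rmin e1 e2). split. { apply Rmin_case; auto. }
    intros i Hi d Hd.
    assert (d < e1) by (eapply Rlt_le_trans; [apply Hd|apply Rmin_l]).
    assert (d < e2) by (eapply Rlt_le_trans; [apply Hd|apply Rmin_r]).
    destruct (Nat.eq_dec i (S n)) as [->|Hne].
    + apply Hp2; lra.
    + apply Hp1; [lia|lra].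
Qed.

Theorem mainTheorem16 (k : nat) (a : R) :
  (1 <= k)%nat -> 0 < a -> ~ inJ k a ->
  exists d0 : R, 0 < d0 /\
    forall d : R, 0 < d < d0 -> Gamma (a - d) k = Gamma (a + d) k.
Proof.
  intros Hk Ha HJ.
  set (P := fun i d => (1 <= i)%nat -> (i <= k)%nat ->
     (INR i <= (a - d) * INR (k - i + 1) <-> INR i <= (a + d) * INR (k - i + 1))).
  destruct (fin_min P k) as [e [He HP]].
  { intros i Hi.
    destruct (le_lt_dec 1 i) as [H1|H1].
    2:{ exists 1; split; [lra|]. intros d Hd H2; lia. }
    set (r := INR i / INR (k - i + 1)).
    assert (Hpos : 0 < INR (k - i + 1)) by (apply lt_0_INR; lia).
    assert (Hne : a <> r).
    { intro E. apply HJ. exists i, (k - i)%nat. repeat split; auto; lia. }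
    assert (Hr : INR i = r * INR (k - i + 1)) by (unfold r; field; lra).
    exists (Rabs (a - r)). split. { apply Rabs_pos_lt; lra. }
    intros d Hd _ _. rewrite Hr.
    assert (Hiff : forall b, (r * INR (k - i + 1) <= b * INR (k - i + 1) <-> r <= b)).
    { intro b; split; intro H.
      - apply Rmult_le_reg_r in H; auto.
      - apply Rmult_le_compat_r; lra. }
    rewrite !Hiff.
    destruct (Rle_dec r a).
    + rewrite Rabs_right in Hd by lra. lra.
    + rewrite Rabs_left in Hd by lra. lra. }
  exists (Rmin a e). split. { apply Rmin_case; auto. }
  intros d Hd.
  assert (Hda : d < a) by (eapply Rlt_le_trans; [apply Hd|apply Rmin_l]).
  assert (Hde : d < e) by (eapply Rlt_le_trans; [apply Hd|apply Rmin_r]).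
  destruct (Gamma_inv (a - d) k ltac:(lra)) as [S1 I1].
  destruct (Gamma_inv (a + d) k ltac:(lra)) as [S2 I2].
  destruct (Gamma (a - d) k) as [x1 y1], (Gamma (a + d) k) as [x2 y2].
  simpl in *.
  assert (T : forall i j, (1 <= i)%nat -> (i + j = k)%nat ->
     (INR i <= (a - d) * INR (j + 1) <-> INR i <= (a + d) * INR (j + 1))).
  { intros i j Hi Hij. replace j with (k - i)%nat by lia.
    apply (HP i ltac:(lia) d ltac:(lra)); lia. }
  destruct (lt_eq_lt_dec x1 x2) as [[Hlt|Heq]|Hgt].
  - exfalso. assert (H := proj1 (I2 x2 y2 ltac:(lia) S2) (le_n _)).
    apply (T x2 y2 ltac:(lia) S2) in H. apply (I1 x2 y2 ltac:(lia) S2) in H. lia.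
  - f_equal; lia.
  - exfalso. assert (H := proj1 (I1 x1 y1 ltac:(lia) S1) (le_n _)).
    apply (T x1 y1 ltac:(lia) S1) in H. apply (I2 x1 y1 ltac:(lia) S1) in H. lia.
Qed.
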